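(* (B case) Let $d\ge1$, $n\ge d$, and let $(\xi_1,\dots,\xi_n)$ be random vectors in $\mathbb{R}^d$ with $(\xi_1,\dots,\xi_n)\stackrel{d}{=}(\varepsilon_1\xi_{\sigma(1)},\dots,\varepsilon_n\xi_{\sigma(n)})$ for all permutations $\sigma$ and all $\varepsilon\in\{-1,1\}^n$, such that any $d$ vectors among $S_1,\dots,S_n$ are linearly independent a.s. Then $\ker A$ a.s. has codimension $d$ in $\mathbb{R}^n$ and a.s. is in general position w.r.t. $\mathcal{A}(B_n)$. (D case) Let $d\ge1$, $n\ge\max\{2,d\}$, and let $(\xi_1,\dots,\xi_n)$ be random vectors in $\mathbb{R}^d$ with the same distributional invariance but only for signs with $\varepsilon_1\cdots\varepsilon_n=1$, such that any $d$ vectors from either collection $S_1,\dots,S_n$ or $S_1,\dots,S_{n-1},S_n^*$ are linearly independent a.s. Then $\ker A$ a.s. has codimension $d$ in $\mathbb{R}^n$ and a.s. is in general position w.r.t. $\mathcal{A}(D_n)$.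
   Context: $S_k=\xi_1+\dots+\xi_k$, $S_n^*=S_{n-1}-\xi_n$, and $A$ is the $d\times n$ matrix with columns $\xi_1,\dots,\xi_n$, viewed as a linear map $\mathbb{R}^n\to\mathbb{R}^d$. $\mathcal{A}(B_n)$ consists of the hyperplanes $x_i=x_j$, $x_i=-x_j$ ($1\le i<j\le n$) and $x_k=0$ ($1\le k\le n$) in $\mathbb{R}^n$; $\mathcal{A}(D_n)$ of the hyperplanes $x_i=x_j$, $x_i=-x_j$ ($1\le i<j\le n$). For an arrangement $\mathcal{A}$ and $\mathcal{B}\subset\mathcal{A}$, $\mathrm{rank}(\mathcal{B})=n-\dim\bigcap_{H\in\mathcal{B}}H$. A linear subspace $M$ of $\mathbb{R}^n$ of codimension $m$ is in general position w.r.t. $\mathcal{A}$ if for every nonempty $\mathcal{B}\subset\mathcal{A}$, $\dim\bigcap_{H\in\mathcal{B}}(H\cap M)$ equals $n-m-\mathrm{rank}(\mathcal{B})$ if $\mathrm{rank}(\mathcal{B})\le n-m$ and $0$ if $\mathrm{rank}(\mathcal{B})\ge n-m$. *)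

(* Defs.v *)
From HB Require Import structures.
From mathcomp Require Import all_boot all_order all_algebra all_fingroup.
From mathcomp Require Import all_classical all_reals all_analysis.
Set Implicit Arguments. Unset Strict Implicit. Unset Printing Implicit Defensive.
Import Order.TTheory GRing.Theory Num.Theory.
Local Open Scope classical_set_scope.
Local Open Scope ring_scope.

(* Subspaces of R^n are represented (mxalgebra style) by the row space of a
   matrix; vectors of R^n are row vectors 'rV[R]_n. *)

Definition hyperplane (R : fieldType) (n : nat) (a : 'rV[R]_n) : 'M[R]_n :=
  kermx a^T.

(* an arrangement = finite list of hyperplanes, given by normal vectors;
   a subfamily is a set of indices into that list *)
Definition arr_cap (R : fieldType) (n : nat) (arr : seq 'rV[R]_n)
  (B : {set 'I_(size arr)}) : 'M[R]_n :=
  (\bigcap_(i in B) hyperplane (nth 0 arr i))%MS.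

Definition arr_rank (R : fieldType) (n : nat) (arr : seq 'rV[R]_n)
  (B : {set 'I_(size arr)}) : nat :=
  (n - \rank (arr_cap B))%N.

Definition codim (R : fieldType) (n : nat) (M : 'M[R]_n) : nat :=
  (n - \rank M)%N.

Definition general_position (R : fieldType) (n : nat) (M : 'M[R]_n)
  (arr : seq 'rV[R]_n) : Prop :=
  let m := codim M in
  forall B : {set 'I_(size arr)}, B != finset.set0 ->
    \rank (arr_cap B :&: M)%MS =
      (if (arr_rank B <= n - m)%N then (n - m - arr_rank B)%N else 0%N).

Definition evec (R : fieldType) (n : nat) (i : 'I_n) : 'rV[R]_n := delta_mx 0 i.

Definition arr_D (R : fieldType) (n : nat) : seq 'rV[R]_n :=
  [seq evec R i - evec R j | i : 'I_n <- enum 'I_n, j : 'I_n <- [seq j : 'I_n <- enum 'I_n | (val i < val j)%N]]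
  ++ [seq evec R i + evec R j | i : 'I_n <- enum 'I_n, j : 'I_n <- [seq j : 'I_n <- enum 'I_n | (val i < val j)%N]].

Definition arr_B (R : fieldType) (n : nat) : seq 'rV[R]_n :=
  arr_D R n ++ [seq evec R k | k <- enum 'I_n].

Definition matA (R : fieldType) (d n : nat) (xi : 'I_n -> 'rV[R]_d) : 'M[R]_(d, n) :=
  \matrix_(r < d, i < n) xi i 0 r.

Definition kerA (R : fieldType) (d n : nat) (xi : 'I_n -> 'rV[R]_d) : 'M[R]_n :=
  kermx (matA xi)^T.

(* partial sums S_k = xi_1 + ... + xi_k, indexed by k : 'I_n meaning S_{k+1} *)
Definition Ssum (R : fieldType) (d n : nat) (xi : 'I_n -> 'rV[R]_d) (k : 'I_n) : 'rV[R]_d :=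
  \sum_(i < n | (i <= k)%N) xi i.

Definition Sstar (R : fieldType) (d n : nat) (xi : 'I_n.+1 -> 'rV[R]_d) : 'rV[R]_d :=
  \sum_(i < n.+1 | (i < n)%N) xi i - xi ord_max.

Definition Sstar_coll (R : fieldType) (d n : nat) (xi : 'I_n.+1 -> 'rV[R]_d)
  (k : 'I_n.+1) : 'rV[R]_d :=
  if (k < n)%N then Ssum xi k else Sstar xi.

Definition any_d_indep (R : fieldType) (d n : nat) (v : 'I_n -> 'rV[R]_d) : Prop :=
  forall f : 'I_d -> 'I_n, injective f -> row_free (\matrix_(j < d) v (f j)).

(* Borel sigma-algebra on (R^d)^n, viewed as n x d matrices (row i = xi_i):
   generated by the coordinate maps. *)
Definition mx_coord_gen (R : realType) (n d : nat) : set (set 'M[R]_(n, d)) :=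
  [set A | exists (i : 'I_n) (r : 'I_d) (U : set R),
      measurable U /\ A = (fun M : 'M[R]_(n, d) => M i r) @^-1` U].

Definition mx_borel (R : realType) (n d : nat) (A : set 'M[R]_(n, d)) : Prop :=
  <<s @mx_coord_gen R n d >> A.

Definition random_vectors (R : realType) (dT : measure_display)
  (T : measurableType dT) (d n : nat) (xi : 'I_n -> T -> 'rV[R]_d) : Prop :=
  forall (i : 'I_n) (r : 'I_d), measurable_fun setT (fun w => xi i w 0 r).

Definition joint (R : realType) (T : Type) (d n : nat)
  (xi : 'I_n -> T -> 'rV[R]_d) : T -> 'M[R]_(n, d) :=
  fun w => \matrix_(i < n) xi i w.

Definition eq_in_law (R : realType) (dT : measure_display) (T : measurableType dT)
  (P : probability T R) (n d : nat) (X Y : T -> 'M[R]_(n, d)) : Prop :=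
  forall A, mx_borel A -> P (X @^-1` A) = P (Y @^-1` A).

(* (xi_1..xi_n) =d (eps_1 xi_sigma(1), ..., eps_n xi_sigma(n)), where
   eps_i = (-1)^(e i) *)
Definition signed_perm (R : realType) (T : Type) (d n : nat)
  (xi : 'I_n -> T -> 'rV[R]_d) (s : 'S_n) (e : 'I_n -> bool) : 'I_n -> T -> 'rV[R]_d :=
  fun i w => ((-1) ^+ e i) *: xi (s i) w.

Definition sign_product_one (n : nat) (e : 'I_n -> bool) : Prop :=
  ~~ odd (\sum_(i < n) (e i : nat)).

(* Main.v *)
Require Import Defs.
From HB Require Import structures.
From mathcomp Require Import all_boot all_order all_algebra all_fingroup.
From mathcomp Require Import all_classical all_reals all_analysis.
From mathcomp Require Import zify.
Import Order.TTheory GRing.Theory Num.Theory.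
Set Implicit Arguments. Unset Strict Implicit. Unset Printing Implicit Defensive.
Local Open Scope ring_scope.

Module Det.
Import mathcomp.boot.seq mathcomp.boot.fintype mathcomp.boot.finset mathcomp.boot.bigop.


Section Flat.
Variables (R : fieldType) (n : nat) (L : 'M[R]_n).

Definition cL (x : 'I_n) := col x L.
Definition rl (x y : 'I_n) := (cL x == cL y) || (cL x == - cL y).

Lemma rl_refl x : rl x x. Proof. by rewrite /rl eqxx. Qed.
Lemma rl_sym x y : rl x y -> rl y x.
Proof. by rewrite /rl => /orP[/eqP->|/eqP->]; rewrite ?eqxx ?opprK ?eqxx ?orbT. Qed.
Lemma rl_trans x y z : rl x y -> rl y z -> rl x z.
Proof.
rewrite /rl => /orP[]/eqP-> /orP[]/eqP->; rewrite ?opprK eqxx ?orbT //.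
Qed.

Definition rep x := odflt x [pick y | rl y x].
Lemma rl_rep x : rl (rep x) x.
Proof. rewrite /rep; case: pickP => [y //|/(_ x)]; by rewrite rl_refl. Qed.
Lemma rep_eq x y : rl x y -> rep x = rep y.
Proof.
move=> rxy; rewrite /rep (@eq_pick _ [pred z | rl z x] [pred z | rl z y]).
  by case: pickP => //= /(_ y) /=; rewrite rl_refl.
move=> z /=; apply/idP/idP => h; first exact: rl_trans h rxy.
exact: rl_trans h (rl_sym rxy).
Qed.
Lemma rep_idem x : rep (rep x) = rep x.
Proof. exact/rep_eq/rl_rep. Qed.

Definition sg x := cL x != cL (rep x).
Lemma cL_sg x : cL x = (-1) ^+ sg x *: cL (rep x).
Proof.
rewrite /sg; case: eqP => [->|ne]; first by rewrite expr0 scale1r.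
rewrite expr1 scaleN1r; move: (rl_rep x); rewrite /rl => /orP[/eqP e|/eqP ->].
  by case: ne.
by rewrite opprK.
Qed.

Lemma cL_rep0 x : (cL (rep x) == 0) = (cL x == 0).
Proof.
rewrite (cL_sg x); case: (sg x); rewrite ?expr0 ?expr1 ?scale1r ?scaleN1r //.
by rewrite oppr_eq0.
Qed.

Definition Rep := [set x | (cL x != 0) && (rep x == x)].

Lemma coord_sub (v : 'rV[R]_n) x : (v <= L)%MS -> v 0 x = (-1) ^+ sg x * v 0 (rep x).
Proof.
case/submxP=> u ->.
have cE y : (u *m L) 0 y = (u *m cL y) 0 0.
  by rewrite !mxE; apply: eq_bigr => k _; rewrite mxE.
by rewrite !cE (cL_sg x) -scalemxAr mxE.
Qed.

Lemma coord0 (v : 'rV[R]_n) x : (v <= L)%MS -> cL x = 0 -> v 0 x = 0.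
Proof.
case/submxP=> u ->.
have cE y : (u *m L) 0 y = (u *m cL y) 0 0.
  by rewrite !mxE; apply: eq_bigr => k _; rewrite mxE.
by rewrite cE => ->; rewrite mulmx0 mxE.
Qed.

Lemma vec0 (v : 'rV[R]_n) : (v <= L)%MS -> (forall x, x \in Rep -> v 0 x = 0) -> v = 0.
Proof.
move=> vL h; apply/rowP => x; rewrite mxE.
have [c0|c0] := eqVneq (cL x) 0; first exact: coord0.
by rewrite (coord_sub x vL) h ?mulr0 // inE rep_idem eqxx andbT cL_rep0.
Qed.

Lemma rank_Rep : (\rank L <= #|Rep|)%N.
Proof.
pose C : 'M[R]_(n, #|Rep|) := \matrix_(i, t) (i == enum_val t)%:R.
rewrite -(mxrank_mul_ker L C).
have -> : (L :&: kermx C)%MS = 0.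
  apply/row_matrixP => i; rewrite row0; apply: vec0.
    exact: submx_trans (row_sub i _) (capmxSl _ _).
  move=> x xR; have := submx_trans (row_sub i _) (capmxSr L (kermx C)).
  move/sub_kermxP/matrixP/(_ 0 (enum_rank_in xR x)); rewrite !mxE.
  rewrite (bigD1 x) //= big1; last first.
    by move=> y /negbTE ny; rewrite !mxE enum_rankK_in // ny mulr0.
  by rewrite addr0 !mxE enum_rankK_in // eqxx mulr1.
by rewrite mxrank0 addn0 rank_leq_col.
Qed.

Definition pvec (P : {set 'I_n}) : 'rV[R]_n := \row_x (if x \in P then (-1) ^+ sg x else 0).

Definition closedP (P : {set 'I_n}) :=
  (forall x, x \in P -> cL x != 0) /\ (forall x y, rl x y -> (x \in P) = (y \in P)).

Definition form (a : 'rV[R]_n) :=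
  (exists i j (b : bool), i != j /\ a = evec R i + (-1) ^+ b *: evec R j) \/ (exists k, a = evec R k).

Lemma mulE1 m (M : 'M[R]_(m, n)) k : M *m (evec R k)^T = col k M.
Proof. by rewrite /evec trmx_delta colE. Qed.

Lemma mulE2 m (M : 'M[R]_(m, n)) i j c :
  M *m (evec R i + c *: evec R j)^T = col i M + c *: col j M.
Proof. by rewrite linearD linearZ /= mulmxDr -scalemxAr !mulE1. Qed.

Lemma mx11_eq0 (M : 'M[R]_1) : (M == 0) = (M 0 0 == 0).
Proof.
apply/eqP/eqP => [->|h]; first by rewrite mxE.
by apply/matrixP => u v; rewrite !ord1 h mxE.
Qed.

Lemma pvec_hyp P a : closedP P -> form a -> (L <= hyperplane a)%MS ->
  (pvec P <= hyperplane a)%MS.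
Proof.
case=> PZ Pc; rewrite /hyperplane !sub_kermx.
case=> [[i [j [b [nij ->]]]]|[k ->]]; last first.
  rewrite !mulE1 => /eqP ck; rewrite mx11_eq0 !mxE.
  by case: ifP => // /PZ; rewrite /cL ck eqxx.
rewrite !mulE2 => /eqP e0; rewrite mx11_eq0 !mxE.
have e : cL i + (-1) ^+ b *: cL j = 0 := e0; clear e0.
have [c0|c0] := eqVneq (cL i) 0.
  have cj : cL j = 0.
    by move: e; rewrite c0 add0r => /eqP; rewrite scaler_eq0 signr_eq0 => /eqP.
  case: ifP => [/PZ|_]; first by rewrite c0 eqxx.
  case: ifP => [/PZ|_]; first by rewrite cj eqxx.
  by rewrite mulr0 addr0.
have rij : rl i j.
  move: e => /eqP; rewrite addr_eq0 /rl => /eqP ->.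
  by case: b; rewrite ?expr0 ?expr1 ?scale1r ?scaleN1r ?opprK eqxx ?orbT.
rewrite -(Pc _ _ rij); case: ifP => iP; last by rewrite mulr0 addr0.
have rr : rep i = rep j by exact: rep_eq.
have cr : cL (rep i) != 0 by rewrite cL_rep0.
move: e; rewrite (cL_sg i) (cL_sg j) -rr scalerA -scalerDl.
by move/eqP; rewrite scaler_eq0 (negbTE cr) orbF.
Qed.

Definition pos x := index (rep x) (enum Rep).
Definition Aset (t : nat) := [set x | (cL x != 0) && (pos x <= t)%N].

Lemma Aset_closed t : closedP (Aset t).
Proof.
split=> [x|x y rxy]; first by rewrite inE => /andP[].
by rewrite !inE /pos -(cL_rep0 x) -(cL_rep0 y) (rep_eq rxy).
Qed.

Section Chain.
Variables (m : nat) (hm : (m <= #|Rep|)%N).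

Definition rho (t : 'I_m) : 'I_n := enum_val (widen_ord hm t).

Lemma rho_Rep t : rho t \in Rep. Proof. exact: enum_valP. Qed.

Lemma pos_rho t : pos (rho t) = t.
Proof.
have := rho_Rep t; rewrite /pos inE => /andP[_ /eqP ->].
rewrite /rho (enum_val_nth (rho t)) index_uniq ?enum_uniq //.
by rewrite -cardE /= (leq_trans (ltn_ord t)).
Qed.

Lemma rho_in t : rho t \in Aset t.
Proof. by rewrite inE pos_rho leqnn andbT; have := rho_Rep t; rewrite inE => /andP[]. Qed.

Lemma Aset_n0 (t : 'I_m) : Aset t != set0.
Proof. by apply/set0Pn; exists (rho t); exact: rho_in. Qed.

Lemma Aset_proper (t t' : 'I_m) : (t < t')%N -> Aset t \proper Aset t'.
Proof.
move=> tt'; apply/properP; split.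
  apply/subsetP => x; rewrite !inE => /andP[-> /leq_trans]; apply; exact: ltnW.
exists (rho t'); first exact: rho_in.
by rewrite inE pos_rho leqNgt tt' andbF.
Qed.
End Chain.

Section Core.
Variables (d : nat) (xi : 'I_n -> 'rV[R]_d).

Definition ChainHyp := forall (m : nat) (A : 'I_m -> {set 'I_n}) (s : 'I_n -> bool),
  (m <= d)%N -> (forall t, A t != set0) -> (forall t t' : 'I_m, (t < t')%N -> A t \proper A t') ->
  row_free (\matrix_(t < m) \sum_(x in A t) (-1) ^+ s x *: xi x).

Lemma pvecA m (A : 'I_m -> {set 'I_n}) (s : 'I_n -> bool) :
  (\matrix_(t < m) (\row_x (if x \in A t then (-1) ^+ s x else 0) : 'rV[R]_n)) *m (matA xi)^T
  = \matrix_(t < m) \sum_(x in A t) (-1) ^+ s x *: xi x.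
Proof.
apply/matrixP => t r; rewrite !mxE summxE [RHS]big_mkcond /=.
apply: eq_bigr => x _; rewrite !mxE.
by case: ifP => _; rewrite ?mul0r ?mxE.
Qed.

Lemma core : ChainHyp -> (forall P, closedP P -> (pvec P <= L)%MS) ->
  \rank (L *m (matA xi)^T) = minn (\rank L) d.
Proof.
move=> CH HL; apply/eqP; rewrite eqn_leq leq_min mxrankM_maxl rank_leq_col /=.
set m := minn (\rank L) d.
have hm : (m <= #|Rep|)%N by rewrite (leq_trans (geq_minl _ _)) ?rank_Rep.
pose Vp := \matrix_(t < m) (\row_x (if x \in Aset t then (-1) ^+ sg x else 0) : 'rV[R]_n).
have VL : (Vp <= L)%MS.
  apply/row_subP => t; rewrite rowK; exact: HL (Aset_closed _).
have := CH m (fun t => Aset t) sg (geq_minr _ _) (Aset_n0 hm) (Aset_proper hm).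
rewrite -pvecA /row_free => /eqP <-.
exact/mxrankS/submxMr.
Qed.
End Core.
End Flat.

Lemma HL_arr (R : fieldType) n (arr : seq 'rV[R]_n) (Bs : {set 'I_(size arr)}) :
  (forall a, a \in arr -> form a) ->
  forall P, closedP (arr_cap Bs) P -> (pvec (arr_cap Bs) P <= arr_cap Bs)%MS.
Proof.
move=> Hf P cP; apply/sub_bigcapmxP => i iB; apply: pvec_hyp => //.
  by apply: Hf; rewrite mem_nth.
by rewrite /arr_cap (bigD1 i) //= capmxSl.
Qed.

Lemma gp_main (R : fieldType) n d (xi : 'I_n -> 'rV[R]_d) (arr : seq 'rV[R]_n) :
  (d <= n)%N -> (forall a, a \in arr -> form a) -> ChainHyp xi ->
  codim (kerA xi) = d /\ general_position (kerA xi) arr.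
Proof.
move=> dn Hf CH.
have key (Bs : {set 'I_(size arr)}) : \rank (arr_cap Bs *m (matA xi)^T) = minn (\rank (arr_cap Bs)) d.
  exact: core CH (HL_arr Hf).
have rA : \rank (matA xi)^T = d.
  have := key set0; rewrite /arr_cap big_set0 mul1mx mxrank1 => ->.
  by apply/minn_idPr.
have cd : codim (kerA xi) = d.
  by rewrite /codim /kerA mxrank_ker rA subKn.
split => //; rewrite /general_position /= => Bs _; rewrite cd /arr_rank.
have := mxrank_mul_ker (arr_cap Bs) (matA xi)^T; rewrite key.
have := rank_leq_row (arr_cap Bs).
rewrite /kerA; move: (\rank (arr_cap Bs)) (\rank (arr_cap Bs :&: kermx (matA xi)^T)%MS) => k r kn.
case: ifP => h; lia.
Qed.

Lemma form_arrB (R : fieldType) n a : a \in arr_B R n -> form a.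
Proof.
rewrite /arr_B /arr_D !mem_cat => /orP[/orP[]|].
- case/allpairsPdep => i [j [_ + ->]]; rewrite mem_filter => /andP[ij _].
  left; exists i, j, true; split; last by rewrite expr1 scaleN1r.
  by rewrite -val_eqE /= neq_ltn ij.
- case/allpairsPdep => i [j [_ + ->]]; rewrite mem_filter => /andP[ij _].
  left; exists i, j, false; split; last by rewrite expr0 scale1r.
  by rewrite -val_eqE /= neq_ltn ij.
- by case/mapP => k _ ->; right; exists k.
Qed.

Lemma form_arrD (R : fieldType) n a : a \in arr_D R n -> form a.
Proof. by move=> h; apply: form_arrB; rewrite /arr_B mem_cat h. Qed.


Lemma restrict (R : fieldType) n d m (V : 'I_n -> 'rV[R]_d) (f : 'I_m -> 'I_n) :
  (m <= d)%N -> (d <= n)%N -> injective f ->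
  (forall F : 'I_d -> 'I_n, injective F -> row_free (\matrix_(j < d) V (F j))) ->
  row_free (\matrix_(t < m) V (f t)).
Proof.
move=> md dn finj H.
pose C := ~: [set f t | t in 'I_m].
have cC : #|C| = (n - m)%N.
  by rewrite cardsCs setCK card_imset // !card_ord.
pose F (j : 'I_d) : 'I_n := if insub (val j) is Some t then f t
  else nth (widen_ord dn j) (enum C) (j - m).
have FC (j : 'I_d) : (m <= j)%N -> F j \in C.
  move=> mj; rewrite /F; case: insubP => [t /=|_]; first by rewrite ltnNge mj.
  rewrite -mem_enum mem_nth // -cardE cC; have := ltn_ord j; lia.
have Finj : injective F.
  move=> j j'; rewrite {1 2}/F.
  case: insubP => [t /= jm jt|/= jm]; case: insubP => [t' /= jm' jt'|/= jm'].
  - by move/finj => tt; apply/val_inj; move: jt jt'; rewrite tt /= => <- <-.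
  - move=> e; have := FC j'; rewrite leqNgt => /(_ jm'); rewrite /F.
    have -> : insub (val j') = None :> option 'I_m by rewrite insubN.
    by rewrite -e inE imset_f.
  - move=> e; have := FC j; rewrite leqNgt => /(_ jm); rewrite /F.
    have -> : insub (val j) = None :> option 'I_m by rewrite insubN.
    by rewrite e inE imset_f.
  - have sz : size (enum C) = (n - m)%N by rewrite -cardE.
    rewrite -!leqNgt in jm jm'.
    move=> e; have e' : nth (widen_ord dn j) (enum C) (j - m) =
                        nth (widen_ord dn j) (enum C) (j' - m).
      by rewrite e; apply: set_nth_default; rewrite sz; have := ltn_ord j'; lia.
    move/eqP: e'; rewrite nth_uniq ?enum_uniq ?sz //.
    + move/eqP => e2; apply/val_inj; rewrite /=; move: e2; lia.
    + have := ltn_ord j; lia.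
    + have := ltn_ord j'; lia.
have Fw (t : 'I_m) : F (widen_ord md t) = f t.
  rewrite /F; case: insubP => [t' _ /= e|/=]; last by rewrite ltn_ord.
  by congr f; apply/val_inj.
pose P : 'M[R]_(m, d) := \matrix_(t, j) (j == widen_ord md t)%:R.
have -> : \matrix_(t < m) V (f t) = P *m \matrix_(j < d) V (F j).
  apply/matrixP => t r; rewrite !mxE (bigD1 (widen_ord md t)) //= big1.
    by rewrite !mxE eqxx mul1r addr0 Fw.
  by move=> j /negbTE nj; rewrite !mxE nj mul0r.
rewrite /row_free mxrankMfree ?H //.
apply/row_freeP; exists P^T; apply/matrixP => t t'.
rewrite !mxE (bigD1 (widen_ord md t)) //= big1.
  rewrite !mxE eqxx mul1r addr0; congr (_%:R).
by move=> j /negbTE nj; rewrite !mxE nj mul0r.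
Qed.

Section KeyPerm.
Variables (n : nat) (m : nat) (A : 'I_m -> {set 'I_n}).
Hypotheses (An0 : forall t, A t != set0)
  (Apr : forall t t' : 'I_m, (t < t')%N -> A t \proper A t').

Lemma Asub (t t' : 'I_m) : (t <= t')%N -> A t \subset A t'.
Proof.
rewrite leq_eqVlt => /orP[/eqP e|/Apr/proper_sub //].
by have -> : t = t' by apply/val_inj.
Qed.

Definition cnt x := #|[set t | x \notin A t]|.
Definition key (x : 'I_n) := (cnt x * n + x)%N.

Lemma key_lt x y t : x \in A t -> y \notin A t -> (key x < key y)%N.
Proof.
move=> xA yA.
have : (cnt x < cnt y)%N.
  apply: proper_card; apply/properP; split.
    apply/subsetP => t'; rewrite !inE => xt'.
    have [tt'|t't] := leqP t t'.
      by move: xt'; rewrite (subsetP (Asub tt')).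
    by apply/negP => /(subsetP (Asub (ltnW t't))); apply/negP.
  by exists t; rewrite !inE ?xA.
rewrite /key => h.
have h2 : ((cnt x).+1 * n <= cnt y * n)%N by rewrite leq_mul2r h orbT.
have := ltn_ord x; lia.
Qed.

Lemma key_inj : injective key.
Proof.
move=> x y /(congr1 (modn^~ n)); rewrite /key !modnMDl !modn_small //.
by move=> e; apply/val_inj.
Qed.

Definition gset x := [set y | (key y < key x)%N].

Lemma g_lt x : (#|gset x| < n)%N.
Proof.
have : gset x \subset [set~ x].
  by apply/subsetP => y; rewrite !inE; apply: contraTneq => ->; rewrite ltnn.
move/subset_leq_card; rewrite cardsC1 card_ord.
by have := ltn_ord x; lia.
Qed.

Definition g x : 'I_n := Ordinal (g_lt x).

Lemma g_mono x y : (key x < key y)%N -> (g x < g y)%N.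
Proof.
move=> kxy; apply: proper_card; apply/properP; split.
  by apply/subsetP => z; rewrite !inE => /ltn_trans; apply.
by exists x; rewrite !inE ?ltnn.
Qed.

Lemma g_inj : injective g.
Proof.
move=> x y e; have [h|h|h] := ltngtP (key x) (key y).
- by have := g_mono h; rewrite e ltnn.
- by have := g_mono h; rewrite e ltnn.
- exact: key_inj.
Qed.

Definition gp : 'S_n := perm g_inj.

Lemma g_A x t : (g x < #|A t|)%N = (x \in A t).
Proof.
have [xA|xA] := boolP (x \in A t).
  have : gset x \subset A t :\ x.
    apply/subsetP => y; rewrite !inE => kyx; apply/andP; split.
      by apply: contraTneq kyx => ->; rewrite ltnn.
    by apply: contraTT kyx => yA; rewrite -leqNgt ltnW // (key_lt xA yA).
  move/subset_leq_card => h; have cD := cardsD1 x (A t); rewrite xA /= in cD.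
  by rewrite /= cD add1n ltnS; apply: h.
apply/negbTE; rewrite -leqNgt /=; apply: subset_leq_card.
by apply/subsetP => y yA; rewrite inE (key_lt yA xA).
Qed.

Lemma ft_lt t : (#|A t|.-1 < n)%N.
Proof.
have := max_card (A t); rewrite card_ord.
have : (0 < #|A t|)%N by rewrite card_gt0.
lia.
Qed.

Definition ff t : 'I_n := Ordinal (ft_lt t).

Lemma ff_inj : injective ff.
Proof.
move=> t t' /(congr1 val) /= e.
have p0 s : (0 < #|A s|)%N by rewrite card_gt0.
have [h|h|h] := ltngtP t t'.
- have := proper_card (Apr h).
  by rewrite -(prednK (p0 t)) -(prednK (p0 t')) e ltnn.
- have := proper_card (Apr h).
  by rewrite -(prednK (p0 t)) -(prednK (p0 t')) e ltnn.
- exact/val_inj.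
Qed.

Lemma le_ff (i : 'I_n) t : (i <= ff t)%N = ((gp^-1)%g i \in A t) .
Proof.
have e : g ((gp^-1)%g i) = i by move: (permKV gp i); rewrite {1}/gp permE.
rewrite -g_A e /=.
have : (0 < #|A t|)%N by rewrite card_gt0.
by move: (#|A t|) => [|k] //= _; rewrite ltnS.
Qed.

Lemma prefix (R : fieldType) d (xi : 'I_n -> 'rV[R]_d) (sg : 'I_n -> bool) t :
  Ssum (fun i => (-1) ^+ sg ((gp^-1)%g i) *: xi ((gp^-1)%g i)) (ff t)
  = \sum_(x in A t) (-1) ^+ sg x *: xi x.
Proof.
rewrite /Ssum (reindex_inj (@perm_inj _ gp)) /=.
apply: eq_big => x; last by rewrite permK.
by rewrite le_ff permK.
Qed.
End KeyPerm.

Lemma chain_of (R : fieldType) n d (xi : 'I_n -> 'rV[R]_d) m (A : 'I_m -> {set 'I_n})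
  (sg : 'I_n -> bool) (An0 : forall t, A t != set0)
  (Apr : forall t t' : 'I_m, (t < t')%N -> A t \proper A t') (V : 'I_n -> 'rV[R]_d) :
  (m <= d)%N -> (d <= n)%N ->
  (forall F : 'I_d -> 'I_n, injective F -> row_free (\matrix_(j < d) V (F j))) ->
  V =1 Ssum (fun i => (-1) ^+ sg ((gp A)^-1%g i) *: xi ((gp A)^-1%g i)) ->
  row_free (\matrix_(t < m) \sum_(x in A t) (-1) ^+ sg x *: xi x).
Proof.
move=> md dn HV eV.
have h := restrict md dn (ff_inj Apr) HV.
suff <- : \matrix_(t < m) V (ff An0 t) = \matrix_(t < m) \sum_(x in A t) (-1) ^+ sg x *: xi x by [].
by apply/matrixP => t r; rewrite !mxE eV (prefix An0 Apr).
Qed.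

Lemma chainB (R : fieldType) n d (xi : 'I_n -> 'rV[R]_d) : (d <= n)%N ->
  (forall (s : 'S_n) (e : 'I_n -> bool) (F : 'I_d -> 'I_n), injective F ->
     row_free (\matrix_(j < d) Ssum (fun i => (-1) ^+ e i *: xi (s i)) (F j))) ->
  ChainHyp xi.
Proof.
move=> dn H m A sg md An0 Apr.
apply: (chain_of An0 Apr md dn (H ((gp A)^-1%g) (fun i => sg ((gp A)^-1%g i)))).
by [].
Qed.

Lemma odd_sumb n (F : 'I_n -> bool) : odd (\sum_i (F i : nat)) = \big[addb/false]_i F i.
Proof.
rewrite (big_morph odd oddD erefl); apply: eq_bigr => i _; exact: oddb.
Qed.

Lemma chainD (R : fieldType) n d (xi : 'I_n.+1 -> 'rV[R]_d) : (d <= n.+1)%N ->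
  (forall (s : 'S_n.+1) (e : 'I_n.+1 -> bool), sign_product_one e ->
     forall F : 'I_d -> 'I_n.+1, injective F ->
       row_free (\matrix_(j < d) Ssum (fun i => (-1) ^+ e i *: xi (s i)) (F j)) /\
       row_free (\matrix_(j < d) Sstar_coll (fun i => (-1) ^+ e i *: xi (s i)) (F j))) ->
  ChainHyp xi.
Proof.
move=> dn H m A sg md An0 Apr.
set s := (gp A)^-1%g.
set par := odd (\sum_x (sg x : nat)).
pose e i := sg (s i) (+) ((i == ord_max) && par).
have spo : sign_product_one e.
  rewrite /sign_product_one odd_sumb /e big_split /=.
  rewrite [X in _ (+) X](bigD1 ord_max) //= eqxx [X in _ (+) (_ (+) X)]big1 ?addbF; last first.
    by move=> i /negbTE ->.
  have -> : \big[addb/false]_i sg (s i) = \big[addb/false]_i sg i.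
    by rewrite [RHS](reindex_inj (@perm_inj _ s)).
  by rewrite -odd_sumb -/par andTb addbb.
have [p|np] := boolP par; last first.
  apply: (chain_of An0 Apr md dn (fun F Fi => (H s e spo F Fi).1)) => k.
  rewrite /Ssum; apply: eq_bigr => i _; rewrite /e (negbTE np) andbF addbF //.
apply: (chain_of An0 Apr md dn (fun F Fi => (H s e spo F Fi).2)) => k.
rewrite /Sstar_coll; case: ifP => kn.
  rewrite /Ssum; apply: eq_bigr => i ik; rewrite /e.
  suff -> : (i == ord_max) = false by rewrite andFb addbF.
  apply/negbTE; rewrite -val_eqE /=; apply: contraTneq ik => ->.
  by rewrite -ltnNge (leq_trans kn).
have -> : k = ord_max.
  by apply/val_inj => /=; have := ltn_ord k; rewrite ltnNge in kn; lia.
rewrite /Sstar /Ssum.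
rewrite [RHS](eq_bigl (fun _ => true)); last by move=> i; rewrite leq_ord.
rewrite big_mkcond [in RHS]big_mkcond /= !big_ord_recr /= ltnn.
rewrite /e eqxx andTb p addbT -!addrA; congr (_ + _).
  apply: eq_bigr => i _; rewrite ltn_ord /=.
  have -> : (widen_ord (leqnSn n) i == ord_max) = false.
    by apply/negbTE; rewrite -val_eqE /= neq_ltn ltn_ord.
  by rewrite andFb addbF.
by case: (sg (s ord_max)); rewrite /= ?expr0 ?expr1 ?scale1r ?scaleN1r ?opprK add0r.
Qed.

End Det.
Import Det.
Local Open Scope classical_set_scope.


Definition mxT (R : realType) n d : Type := 'M[R]_(n,d).
HB.instance Definition _ (R : realType) (n d : nat) := Choice.copy (mxT R n d) 'M[R]_(n,d).
HB.instance Definition _ (R : realType) (n d : nat) := isPointed.Build (mxT R n d) 0.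
Definition MT (R : realType) n d := g_sigma_algebraType (@mx_coord_gen R n d : set (set (mxT R n d))).

Section Meas.
Variables (R : realType) (n d : nat).

Lemma mcoord i r : measurable_fun [set: MT R n d] (fun M : MT R n d => (M : 'M[R]_(n, d)) i r).
Proof.
move=> _ U mU; rewrite setTI; apply: sub_sigma_algebra; exists i, r, U; split => //.
Qed.

Lemma mdet (K : 'M[R]_(d, n)) :
  measurable_fun [set: MT R n d] (fun M : MT R n d => \det (K *m (M : 'M[R]_(n, d)))).
Proof.
rewrite /determinant; apply: measurable_sum => s.
apply: measurable_realfun.measurable_funM; first exact: measurable_cst.
apply: measurable_prod => j _.
rewrite /=; under eq_fun do rewrite mxE.
apply: measurable_sum => k; apply: measurable_realfun.measurable_funM; first exact: measurable_cst.
exact: mcoord.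
Qed.

Lemma bad_borel (K : 'M[R]_(d, n)) : mx_borel [set M : 'M[R]_(n, d) | ~ row_free (K *m M)].
Proof.
have -> : [set M : 'M[R]_(n, d) | ~ row_free (K *m M)] =
   [set: MT R n d] `&` (fun M : MT R n d => \det (K *m (M : 'M[R]_(n, d)))) @^-1` [set 0].
  apply/seteqP; split => M /=.
    move=> h; split => //=; apply/eqP/negPn/negP => h2; apply: h.
    by rewrite row_free_unit unitmxE unitfE.
  by move=> [_ /= h]; rewrite row_free_unit unitmxE unitfE h eqxx.
exact: (mdet K measurableT (measurable_set1 0)).
Qed.
End Meas.

Section Pre.
Variables (R : realType) (dT : measure_display) (T : measurableType dT) (n d : nat).

Lemma mpre (X : T -> 'M[R]_(n, d)) :
  (forall i r, measurable_fun [set: T] (fun w => X w i r)) ->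
  forall A, mx_borel A -> measurable (X @^-1` A).
Proof.
move=> hX A hA.
have mX : measurable_fun [set: T] (X : T -> MT R n d).
  apply: (@measurability _ _ _ (MT R n d) _ _ (@mx_coord_gen R n d)) => //.
  move=> _ [B [i [r [U [mU ->]]]] <-].
  by have := hX i r measurableT U mU.
by have := mX measurableT A hA; rewrite setTI.
Qed.

Lemma transfer (P : probability T R) (X Y : T -> 'M[R]_(n, d)) (K : 'M[R]_(d, n)) :
  (forall i r, measurable_fun [set: T] (fun w => X w i r)) ->
  (forall i r, measurable_fun [set: T] (fun w => Y w i r)) ->
  eq_in_law P X Y ->
  {ae P, forall w, row_free (K *m X w)} -> {ae P, forall w, row_free (K *m Y w)}.
Proof.
move=> hX hY law [N [mN PN sN]].
have bB := bad_borel K.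
have mXB := mpre hX bB; have mYB := mpre hY bB.
have P0 : P (X @^-1` [set M | ~ row_free (K *m M)]) = 0.
  apply/eqP; rewrite eq_le measure_ge0 andbT -PN; apply: le_measure => //; rewrite ?inE //.
exists (Y @^-1` [set M | ~ row_free (K *m M)]); split.
- exact: mYB.
- by rewrite -(law _ bB).
- by move=> w /= h.
Qed.
End Pre.

Section Comb.
Variables (R : fieldType).

Lemma comb_mx n d m (c : 'I_m -> 'I_n -> R) (v : 'I_n -> 'rV[R]_d) :
  \matrix_(j < m) (\sum_i c j i *: v i) = (\matrix_(j, i) c j i) *m \matrix_(i < n) v i.
Proof.
apply/matrixP => j r; rewrite !mxE summxE; apply: eq_bigr => i _; by rewrite !mxE.
Qed.

Lemma Ssum_comb n d (v : 'I_n -> 'rV[R]_d) k : Ssum v k = \sum_(i < n) ((i <= k)%N)%:R *: v i.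
Proof.
rewrite /Ssum big_mkcond; apply: eq_bigr => i _.
by case: ifP => _; rewrite /= ?mulr1n ?mulr0n ?scale1r ?scale0r.
Qed.

Lemma SsumK n d m (v : 'I_n -> 'rV[R]_d) (F : 'I_m -> 'I_n) :
  \matrix_(j < m) Ssum v (F j) = (\matrix_(j, i) ((i <= F j)%N)%:R) *m \matrix_(i < n) v i.
Proof. rewrite -comb_mx; apply/matrixP => j r; by rewrite !mxE Ssum_comb. Qed.

Lemma Sstar_comb n d (v : 'I_n.+1 -> 'rV[R]_d) k : Sstar_coll v k =
  \sum_(i < n.+1) (if (k < n)%N then ((i <= k)%N)%:R else (if (i < n)%N then 1 else -1)) *: v i.
Proof.
rewrite /Sstar_coll; case: ifP => kn; first exact: Ssum_comb.
rewrite /Sstar big_mkcond [RHS]big_ord_recr /= big_ord_recr /= ltnn addr0 scaleN1r.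
congr (_ - _); apply: eq_bigr => i _; by rewrite ltn_ord scale1r.
Qed.

Lemma SstarK n d m (v : 'I_n.+1 -> 'rV[R]_d) (F : 'I_m -> 'I_n.+1) :
  \matrix_(j < m) Sstar_coll v (F j) =
  (\matrix_(j, i) (if (F j < n)%N then ((i <= F j)%N)%:R else (if (i < n)%N then 1 else -1)))
    *m \matrix_(i < n.+1) v i.
Proof. rewrite -comb_mx; apply/matrixP => j r; by rewrite !mxE Sstar_comb. Qed.
End Comb.

Section RV.
Variables (R : realType) (dT : measure_display) (T : measurableType dT) (d n : nat)
  (xi : 'I_n -> T -> 'rV[R]_d).

Lemma rv_joint : random_vectors xi ->
  forall i r, measurable_fun [set: T] (fun w => joint xi w i r).
Proof. move=> h i r; under eq_fun do rewrite mxE; exact: h. Qed.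

Lemma rv_signed s e : random_vectors xi -> random_vectors (signed_perm xi s e).
Proof.
move=> h i r; rewrite /signed_perm; under eq_fun do rewrite mxE.
apply: measurable_realfun.measurable_funM; [exact: measurable_cst|exact: h].
Qed.
End RV.

Lemma caseB (R : realType) (dT : measure_display) (T : measurableType dT)
      (P : probability T R) (d n : nat) (xi : 'I_n -> T -> 'rV[R]_d) :
    (1 <= d)%N -> (d <= n)%N ->
    random_vectors xi ->
    (forall (s : 'S_n) (e : 'I_n -> bool),
        eq_in_law P (joint xi) (joint (signed_perm xi s e))) ->
    (forall f : 'I_d -> 'I_n, injective f ->
        {ae P, forall w, row_free (\matrix_(j < d) Ssum (fun i => xi i w) (f j))}) ->
    {ae P, forall w, codim (kerA (fun i => xi i w)) = d /\
                     general_position (kerA (fun i => xi i w)) (arr_B R n)}.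
Proof.
move=> d1 dn rv law hf.
have H1 (s : 'S_n) (e : 'I_n -> bool) (F : 'I_d -> 'I_n) : injective F ->
    {ae P, forall w, row_free (\matrix_(j < d) Ssum (fun i => (-1) ^+ e i *: xi (s i) w) (F j))}.
  move=> Fi.
  pose K : 'M[R]_(d, n) := \matrix_(j, i) ((i <= F j)%N)%:R.
  have hX : {ae P, forall w, row_free (K *m joint xi w)}.
    by apply: filterS (hf F Fi) => w h'; rewrite SsumK in h'.
  apply: filterS (transfer (rv_joint rv) (rv_joint (rv_signed s e rv)) (law s e) hX) => w h'.
  by rewrite SsumK.
have H2 : {ae P, forall w, forall (s : 'S_n) (e : {ffun 'I_n -> bool}) (F : {ffun 'I_d -> 'I_n}),
    injectiveb F -> row_free (\matrix_(j < d) Ssum (fun i => (-1) ^+ e i *: xi (s i) w) (F j))}.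
  apply: filter_forall => s; apply: filter_forall => e; apply: filter_forall => F.
  have [Fi|nFi] := boolP (injectiveb F).
    by apply: filterS (H1 s e F (injectiveP _ Fi)) => w h _.
  by apply: aeW => w.
apply: filterS H2 => w h.
apply: (gp_main dn (@form_arrB R n) (chainB dn _)) => s e F Fi.
have Fi' : injectiveb [ffun j => F j] by apply/injectiveP => j j'; rewrite !ffunE; exact: Fi.
have := h s [ffun i => e i] [ffun j => F j] Fi'.
suff -> : \matrix_(j < d) Ssum (fun i => (-1) ^+ [ffun i => e i] i *: xi (s i) w) ([ffun j => F j] j)
  = \matrix_(j < d) Ssum (fun i => (-1) ^+ e i *: xi (s i) w) (F j) by [].
apply/matrixP => j r; rewrite !mxE ffunE /Ssum.
by congr (fun_of_matrix _ 0 r); apply: eq_bigr => i _; rewrite ffunE.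
Qed.

Lemma caseD (R : realType) (dT : measure_display) (T : measurableType dT)
      (P : probability T R) (d n : nat) (xi : 'I_n.+1 -> T -> 'rV[R]_d) :
    (1 <= d)%N -> (2 <= n.+1)%N -> (d <= n.+1)%N ->
    random_vectors xi ->
    (forall (s : 'S_n.+1) (e : 'I_n.+1 -> bool), sign_product_one e ->
        eq_in_law P (joint xi) (joint (signed_perm xi s e))) ->
    (forall f : 'I_d -> 'I_n.+1, injective f ->
        {ae P, forall w, row_free (\matrix_(j < d) Ssum (fun i => xi i w) (f j))}) ->
    (forall f : 'I_d -> 'I_n.+1, injective f ->
        {ae P, forall w, row_free (\matrix_(j < d) Sstar_coll (fun i => xi i w) (f j))}) ->
    {ae P, forall w, codim (kerA (fun i => xi i w)) = d /\
                     general_position (kerA (fun i => xi i w)) (arr_D R n.+1)}.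
Proof.
move=> d1 n2 dn rv law hf hg.
have H1 (s : 'S_n.+1) (e : 'I_n.+1 -> bool) (F : 'I_d -> 'I_n.+1) :
    sign_product_one e -> injective F ->
    {ae P, forall w, row_free (\matrix_(j < d) Ssum (fun i => (-1) ^+ e i *: xi (s i) w) (F j)) /\
       row_free (\matrix_(j < d) Sstar_coll (fun i => (-1) ^+ e i *: xi (s i) w) (F j))}.
  move=> spo Fi.
  pose K : 'M[R]_(d, n.+1) := \matrix_(j, i) ((i <= F j)%N)%:R.
  pose K2 : 'M[R]_(d, n.+1) := \matrix_(j, i) (if (F j < n)%N then ((i <= F j)%N)%:R
        else (if (i < n)%N then 1 else -1)).
  have hX : {ae P, forall w, row_free (K *m joint xi w)}.
    by apply: filterS (hf F Fi) => w h'; rewrite SsumK in h'.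
  have hX2 : {ae P, forall w, row_free (K2 *m joint xi w)}.
    by apply: filterS (hg F Fi) => w h'; rewrite SstarK in h'.
  apply: filterS2 (transfer (rv_joint rv) (rv_joint (rv_signed s e rv)) (law s e spo) hX)
    (transfer (rv_joint rv) (rv_joint (rv_signed s e rv)) (law s e spo) hX2) => w h1 h2.
  by rewrite SsumK SstarK.
have H2 : {ae P, forall w, forall (s : 'S_n.+1) (e : {ffun 'I_n.+1 -> bool})
    (F : {ffun 'I_d -> 'I_n.+1}), sign_product_one e -> injectiveb F ->
    row_free (\matrix_(j < d) Ssum (fun i => (-1) ^+ e i *: xi (s i) w) (F j)) /\
    row_free (\matrix_(j < d) Sstar_coll (fun i => (-1) ^+ e i *: xi (s i) w) (F j))}.
  apply: filter_forall => s; apply: filter_forall => e; apply: filter_forall => F.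
  have [Fi|nFi] := boolP (injectiveb F); last first.
    by apply: aeW => w.
  have [spo|nspo] := boolP (~~ odd (\sum_(i < n.+1) (e i : nat))).
    by apply: filterS (H1 s e F spo (injectiveP _ Fi)) => w h _ _.
  by apply: aeW => w spo; move: nspo; rewrite spo.
apply: filterS H2 => w h.
apply: (gp_main dn (@form_arrD R n.+1) (chainD dn _)) => s e spo F Fi.
have Fi' : injectiveb [ffun j => F j] by apply/injectiveP => j j'; rewrite !ffunE; exact: Fi.
have spo' : sign_product_one [ffun i => e i].
  by rewrite /sign_product_one; under eq_bigr do rewrite ffunE.
have := h s [ffun i => e i] [ffun j => F j] spo' Fi'.
have E1 : \matrix_(j < d) Ssum (fun i => (-1) ^+ [ffun i => e i] i *: xi (s i) w) ([ffun j => F j] j)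
  = \matrix_(j < d) Ssum (fun i => (-1) ^+ e i *: xi (s i) w) (F j).
  apply/matrixP => j r; rewrite !mxE ffunE /Ssum.
  by congr (fun_of_matrix _ 0 r); apply: eq_bigr => i _; rewrite ffunE.
have E2 : \matrix_(j < d) Sstar_coll (fun i => (-1) ^+ [ffun i => e i] i *: xi (s i) w) ([ffun j => F j] j)
  = \matrix_(j < d) Sstar_coll (fun i => (-1) ^+ e i *: xi (s i) w) (F j).
  apply/matrixP => j r; rewrite !mxE ffunE /Sstar_coll /Sstar /Ssum ffunE.
  congr (fun_of_matrix _ 0 r); case: ifP => _.
    by apply: eq_bigr => i _; rewrite ffunE.
  by congr (_ - _); apply: eq_bigr => i _; rewrite ffunE.
by rewrite E1 E2.
Qed.

Theorem lemma6p3 :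
  (* B case *)
  (forall (R : realType) (dT : measure_display) (T : measurableType dT)
      (P : probability T R) (d n : nat) (xi : 'I_n -> T -> 'rV[R]_d),
    (1 <= d)%N -> (d <= n)%N ->
    random_vectors xi ->
    (forall (s : 'S_n) (e : 'I_n -> bool),
        eq_in_law P (joint xi) (joint (signed_perm xi s e))) ->
    (forall f : 'I_d -> 'I_n, injective f ->
        {ae P, forall w, row_free (\matrix_(j < d) Ssum (fun i => xi i w) (f j))}) ->
    {ae P, forall w, codim (kerA (fun i => xi i w)) = d /\
                     general_position (kerA (fun i => xi i w)) (arr_B R n)})
  /\
  (* D case *)
  (forall (R : realType) (dT : measure_display) (T : measurableType dT)
      (P : probability T R) (d n : nat) (xi : 'I_n.+1 -> T -> 'rV[R]_d),
    (1 <= d)%N -> (2 <= n.+1)%N -> (d <= n.+1)%N ->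
    random_vectors xi ->
    (forall (s : 'S_n.+1) (e : 'I_n.+1 -> bool), sign_product_one e ->
        eq_in_law P (joint xi) (joint (signed_perm xi s e))) ->
    (forall f : 'I_d -> 'I_n.+1, injective f ->
        {ae P, forall w, row_free (\matrix_(j < d) Ssum (fun i => xi i w) (f j))}) ->
    (forall f : 'I_d -> 'I_n.+1, injective f ->
        {ae P, forall w, row_free (\matrix_(j < d) Sstar_coll (fun i => xi i w) (f j))}) ->
    {ae P, forall w, codim (kerA (fun i => xi i w)) = d /\
                     general_position (kerA (fun i => xi i w)) (arr_D R n.+1)}).
Proof.
split.
- exact: caseB.
- exact: caseD.
Qed.
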